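(* Let $\mathcal N$ be a smooth manifold, $\gamma$ a symmetric $2$-covariant tensor field, $\boldsymbol\ell$ a one-form and $\ell^{(2)}$ a function on $\mathcal N$. Then $\{\mathcal N,\gamma,\boldsymbol\ell,\ell^{(2)}\}$ is null metric hypersurface data if and only if (i) $\mathrm{Rad}(\gamma|_p)$ is one-dimensional at every $p\in\mathcal N$, and (ii) for every $p$ and every non-zero $e_1\in\mathrm{Rad}(\gamma|_p)$, $\boldsymbol\ell|_p(e_1)\neq0$.
   Context: Metric hypersurface data: $\{\mathcal N,\gamma,\boldsymbol\ell,\ell^{(2)}\}$ such that $\boldsymbol{\mathcal A}|_p((W,a),(Z,b))=\gamma(W,Z)+a\boldsymbol\ell(Z)+b\boldsymbol\ell(W)+ab\ell^{(2)}$ on $T_p\mathcal N\times\mathbb R$ is non-degenerate for all $p$. Its inverse $\mathcal A((\boldsymbol\alpha,a),(\boldsymbol\beta,b))=P(\boldsymbol\alpha,\boldsymbol\beta)+a\,n(\boldsymbol\beta)+b\,n(\boldsymbol\alpha)+ab\,n^{(2)}$ defines $P$, a vector field $n$ and a function $n^{(2)}$; the data is null if $n^{(2)}=0$ everywhere. $\mathrm{Rad}(\gamma|_p)=\{X\in T_p\mathcal N:\gamma|_p(X,\cdot)=0\}$. *)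

(* Defs.v *)
From HB Require Import structures.
From mathcomp Require Import all_boot all_order all_algebra.
Set Implicit Arguments. Unset Strict Implicit. Unset Printing Implicit Defensive.
Import Order.TTheory GRing.Theory Num.Theory.
Local Open Scope ring_scope.

(* Tangent vectors at a point of an n-dimensional manifold are row vectors
   'rV[R]_n (coordinates in a basis of T_pN).  gamma|_p is the Gram matrix g,
   so gamma(W,Z) = W *m g *m Z^T; ell|_p is the column l, so ell(Z) = (Z *m l) 0 0;
   ell2|_p is the scalar l2. *)

(* Gram matrix of the bilinear form bold-A|_p on T_pN x R:
   [W a] *m Amx g l l2 *m [Z b]^T
     = gamma(W,Z) + a ell(Z) + b ell(W) + a b ell2. *)
Definition Amx (R : pzRingType) (n : nat) (g : 'M[R]_n) (l : 'cV[R]_n) (l2 : R)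
  : 'M[R]_(n + 1) := block_mx g l l^T l2%:M.

(* n^(2): the (R,R) component of the inverse form A = (bold-A)^{-1}. *)
Definition n2_of (R : fieldType) (n : nat) (g : 'M[R]_n) (l : 'cV[R]_n) (l2 : R) : R :=
  (invmx (Amx g l l2)) (rshift n (ord0 : 'I_1)) (rshift n (ord0 : 'I_1)).

Definition metric_hypersurface_data (R : fieldType) (P : Type) (n : nat)
  (gamma : P -> 'M[R]_n) (ell : P -> 'cV[R]_n) (ell2 : P -> R) : Prop :=
  forall p, Amx (gamma p) (ell p) (ell2 p) \in unitmx.

Definition null_metric_hypersurface_data (R : fieldType) (P : Type) (n : nat)
  (gamma : P -> 'M[R]_n) (ell : P -> 'cV[R]_n) (ell2 : P -> R) : Prop :=
  metric_hypersurface_data gamma ell ell2 /\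
  forall p, n2_of (gamma p) (ell p) (ell2 p) = 0.

(* Rad(gamma|_p) is the row space of kermx (gamma p) = {X | X *m gamma p = 0}. *)

(* Main.v *)
Require Import Defs.
From HB Require Import structures.
From mathcomp Require Import all_boot all_order all_algebra.
From mathcomp Require Import zify.
Import Order.TTheory GRing.Theory Num.Theory.
Local Open Scope ring_scope.

Section Aux.
Variables (R : fieldType) (n : nat) (g : 'M[R]_n) (l : 'cV[R]_n) (l2 : R).

Lemma rowA (x : 'rV[R]_n) (a : 'rV[R]_1) :
  row_mx x a *m Amx g l l2 = row_mx (x *m g + a *m l^T) (x *m l + a *m l2%:M).
Proof. by rewrite /Amx mul_row_block. Qed.

Lemma F1 : Amx g l l2 \in unitmx -> forall x : 'rV[R]_n,
  x *m g = 0 -> x *m l = 0 -> x = 0.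
Proof.
move=> U x H1 H2.
have H : row_mx x (0 : 'rV[R]_1) *m Amx g l l2 = 0.
  by rewrite rowA H1 H2 !mul0mx !addr0 row_mx0.
have : row_mx x (0 : 'rV[R]_1) = 0.
  by rewrite -[LHS]mulmx1 -(mulmxV U) mulmxA H mul0mx.
by move/(congr1 lsubmx); rewrite row_mxKl linear0.
Qed.

Lemma F2 : Amx g l l2 \in unitmx -> forall e : 'rV[R]_n,
  e *m g = 0 -> (e *m l) ord0 ord0 != 0 -> n2_of g l l2 = 0.
Proof.
move=> U e H1 H2.
have H : row_mx e (0 : 'rV[R]_1) *m Amx g l l2 = row_mx 0 (e *m l).
  by rewrite rowA H1 !mul0mx !addr0.
have E : row_mx e (0 : 'rV[R]_1) = row_mx 0 (e *m l) *m invmx (Amx g l l2).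
  by rewrite -H -mulmxA mulmxV // mulmx1.
have := congr1 (fun M : 'M[R]_(1, n + 1) => M ord0 (rshift n (ord0 : 'I_1))) E.
rewrite /= row_mxEr [X in _ = X]mxE big_split_ord /= big1; last first.
  by move=> i _; rewrite row_mxEl mxE mul0r.
rewrite big_ord1 row_mxEr add0r mxE => /esym /eqP.
by rewrite mulf_eq0 (negPf H2) /= => /eqP.
Qed.

Lemma F3 : Amx g l l2 \in unitmx -> n2_of g l l2 = 0 ->
  exists x : 'rV[R]_n, x *m g = 0 /\ (x *m l) ord0 ord0 = 1.
Proof.
move=> U N.
set r := rshift n (ord0 : 'I_1).
set v := row r (invmx (Amx g l l2)).
have Hv : v *m Amx g l l2 = row r 1%:M by rewrite /v -row_mul mulVmx.
have Ea : rsubmx v = 0.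
  apply/matrixP=> i j; rewrite !ord1 !mxE; exact: N.
rewrite -(hsubmxK v) Ea rowA !mul0mx !addr0 in Hv.
exists (lsubmx v); split.
  have := congr1 lsubmx Hv; rewrite row_mxKl => ->.
  apply/matrixP=> i j; rewrite !mxE /r; case: eqP => // /(congr1 val) /=.
  by move=> h; move: (ltn_ord j); rewrite -h; lia.
have := congr1 rsubmx Hv; rewrite row_mxKr => ->.
by rewrite !mxE eqxx.
Qed.

Lemma nz_row (m : nat) (K : 'M[R]_(m, n)) : K != 0 ->
  exists i, row i K != 0.
Proof.
move=> Kn; apply/existsP; apply: contraR Kn; rewrite negb_exists => /forallP H.
by apply/eqP/row_matrixP => i; rewrite row0; apply/eqP; move: (H i); rewrite negbK.
Qed.

Lemma ker_nz : \rank (kermx g) = 1%N ->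
  exists e : 'rV[R]_n, e *m g = 0 /\ e != 0.
Proof.
move=> Rk; have : kermx g != 0 by apply: contra_eqN Rk => /eqP ->; rewrite mxrank0.
case/nz_row=> i Hi; exists (row i (kermx g)); split=> //.
apply/sub_kermxP; exact: row_sub.
Qed.

Lemma pointwise : g^T = g ->
  (Amx g l l2 \in unitmx /\ n2_of g l l2 = 0) <->
  (\rank (kermx g) = 1%N /\ (forall e : 'rV[R]_n, e *m g = 0 -> e != 0 ->
      (e *m l) ord0 ord0 != 0)).
Proof.
move=> Sym; split.
- case=> U N.
  have Hii : forall e : 'rV[R]_n, e *m g = 0 -> e != 0 -> (e *m l) ord0 ord0 != 0.
    move=> e H1 H2; apply: contra H2 => /eqP H3; apply/eqP; apply: (F1 U _ H1).
    by rewrite [e *m l]mx11_scalar H3 raddf0.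
  split=> //.
  have [x [Hx1 Hx2]] := F3 U N.
  have xn0 : x != 0 by apply/eqP => x0; move: Hx2; rewrite x0 mul0mx mxE => /eqP; rewrite eq_sym oner_eq0.
  have ge1 : (1 <= \rank (kermx g))%N.
    have : (x <= kermx g)%MS by apply/sub_kermxP.
    move/mxrankS; rewrite rank_rV xn0 //.
  apply/eqP; rewrite eqn_leq ge1 andbT; apply/negP => /negP; rewrite -ltnNge => ge2.
  have := mxrank_sum_cap (kermx g) (kermx l).
  have := rank_leq_col (kermx g + kermx l)%MS.
  have := mxrank_ker l; have := rank_leq_col l.
  have := rank_leq_col (kermx g).
  move=> a b c d e.
  have cap1 : (0 < \rank (kermx g :&: kermx l)%MS)%N by lia.
  have : (kermx g :&: kermx l)%MS != 0 by rewrite -mxrank_eq0 -lt0n.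
  case/nz_row => i Hi.
  have Hs := row_sub i (kermx g :&: kermx l)%MS.
  move: Hs; rewrite sub_capmx => /andP [/sub_kermxP K1 /sub_kermxP K2].
  move: (Hii _ K1 Hi); by rewrite K2 mxE eqxx.
- case=> Rk Hii.
  have [e [He1 He2]] := ker_nz Rk.
  have U : Amx g l l2 \in unitmx.
    rewrite -row_free_unit -kermx_eq0; apply/eqP/row_matrixP => i.
    rewrite row0; set w := row i _.
    have Hw : w *m Amx g l l2 = 0 by apply/sub_kermxP; exact: row_sub.
    rewrite -(hsubmxK w) rowA in Hw.
    have [Hw1 Hw2] := eq_row_mx (etrans Hw (esym (row_mx0 _ _ _ _))).
    have Ha : rsubmx w = 0.
      move: Hw1; set a := rsubmx w => Hw1.
      have := congr1 (fun M : 'M[R]_(1, n) => M *m e^T) Hw1.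
      rewrite mul0mx mulmxDl -mulmxA -{1}Sym -trmx_mul He1 trmx0 mulmx0 add0r.
      rewrite -mulmxA -trmx_mul [a]mx11_scalar [e *m l]mx11_scalar tr_scalar_mx mul_scalar_mx scale_scalar_mx.
      have Hc := Hii e He1 He2; move: Hc; set c := (e *m l) ord0 ord0 => Hc.
      set b := a ord0 ord0 => /(congr1 (fun M : 'M[R]_1 => M ord0 ord0)).
      rewrite !mxE eqxx mulr1n => /eqP; rewrite mulf_eq0 (negPf Hc) orbF => /eqP h.
      by rewrite h raddf0.
    rewrite Ha !mul0mx !addr0 in Hw1 Hw2.
    have Hx : lsubmx w = 0.
      apply/eqP; apply: contraT => nz; move: (Hii _ Hw1 nz).
      by rewrite Hw2 mxE eqxx.
    by rewrite -(hsubmxK w) Hx Ha row_mx0.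
  split=> //; exact: (F2 U _ He1 (Hii e He1 He2)).
Qed.
End Aux.

Theorem lemma3p3 (R : realFieldType) (P : Type) (n : nat)
  (gamma : P -> 'M[R]_n) (ell : P -> 'cV[R]_n) (ell2 : P -> R)
  (gamma_sym : forall p, (gamma p)^T = gamma p) :
  null_metric_hypersurface_data gamma ell ell2 <->
  ((forall p, \rank (kermx (gamma p)) = 1%N) /\
   (forall p (e1 : 'rV[R]_n), e1 *m gamma p = 0 -> e1 != 0 ->
      (e1 *m ell p) ord0 ord0 != 0)).
Proof.
split.
- case=> U N.
  have K : forall p, \rank (kermx (gamma p)) = 1%N /\ (forall e1 : 'rV[R]_n, e1 *m gamma p = 0 -> e1 != 0 ->
      (e1 *m ell p) ord0 ord0 != 0).
    move=> p; apply: (proj1 (@pointwise _ _ (gamma p) (ell p) (ell2 p) (gamma_sym p))).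
    exact: (conj (U p) (N p)).
  by split=> [p|p]; [exact: (proj1 (K p)) | exact: (proj2 (K p))].
- case=> H1 H2.
  have K : forall p, Amx (gamma p) (ell p) (ell2 p) \in unitmx /\ n2_of (gamma p) (ell p) (ell2 p) = 0.
    move=> p; apply: (proj2 (@pointwise _ _ (gamma p) (ell p) (ell2 p) (gamma_sym p))).
    exact: (conj (H1 p) (H2 p)).
  by split=> p; [exact: (proj1 (K p)) | exact: (proj2 (K p))].
Qed.
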